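(* Let $V\in\mathcal{V}$ and $\epsilon,c,c_1,c_2\in(0,\mathcal{L}_V(0))$. (1) $\mathcal{L}_V(\tau_V(c))\ge c/(1+c)$, and for all $s>0$, \[\mathcal{L}_V(\tau_V(c)+s)\le c+\frac{\tau_V(c)+s}{s\,e^{s\lambda_V(c)}}.\] (2) $\mathcal{L}_V(T_V(\epsilon))=\epsilon$, and for all $r\ge0$, $s>0$ and $c_1<c_2$, \[\mathcal{L}_V(T_V(\epsilon)+r+s)\le c_1+c_2e^{-(T_V(\epsilon)+r+s)\lambda_V(c_1)}+\frac{\epsilon\,(T_V(\epsilon)+r+s)}{(T_V(\epsilon)+s)e^{r\lambda_V(c_2)}}.\]
   Context: $\mathcal{V}$ is the class of non-decreasing right-continuous $V:(0,\infty)\to\mathbb{R}$ with $\lim_{\lambda\to0^+}V(\lambda)=0$, $\lim_{\lambda\to\infty}V(\lambda)<\infty$; $\mathcal{L}_V(t)=\int_{(0,\infty)}e^{-t\lambda}dV(\lambda)$ for $t\ge0$. $T_V(\epsilon)=\min\{t\ge0:\mathcal{L}_V(t)\le\epsilon\}$. For $c\in(0,\mathcal{L}_V(0))$: $\lambda_V(c)=\inf\{\lambda:V(\lambda)>c\}$, $\tau_V(c)=\sup_{\lambda\ge\lambda_V(c)}\lambda^{-1}\log(1+V(\lambda))$. *)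

(* Defs.v *)
From Stdlib Require Import Reals Lra ClassicalEpsilon.
Open Scope R_scope.

(* Limit of a real sequence (well defined when the sequence converges). *)
Definition Lim (u : nat -> R) : R :=
  epsilon (inhabits 0) (fun l => Un_cv u l).

(* Infimum / supremum of a set of reals (well defined when they exist). *)
Definition is_inf (E : R -> Prop) (m : R) : Prop :=
  (forall x, E x -> m <= x) /\ (forall m', (forall x, E x -> m' <= x) -> m' <= m).
Definition is_sup (E : R -> Prop) (m : R) : Prop :=
  (forall x, E x -> x <= m) /\ (forall m', (forall x, E x -> x <= m') -> m <= m').
Definition Inf (E : R -> Prop) : R := epsilon (inhabits 0) (fun m => is_inf E m).
Definition Sup (E : R -> Prop) : R := epsilon (inhabits 0) (fun m => is_sup E m).

(* The class \mathcal{V}: V : (0,oo) -> R (values outside (0,oo) irrelevant). *)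
Definition in_classV (V : R -> R) : Prop :=
  (forall x y, 0 < x -> x <= y -> V x <= V y) /\
  (forall x, 0 < x -> forall e, 0 < e -> exists d, 0 < d /\
      forall y, x <= y < x + d -> Rabs (V y - V x) < e) /\
  (forall e, 0 < e -> exists d, 0 < d /\ forall y, 0 < y < d -> Rabs (V y) < e) /\
  (exists l, forall e, 0 < e -> exists M, forall y, M < y -> Rabs (V y - l) < e).

(* Riemann-Stieltjes sum of f against V on [a,b], uniform partition into n+1 pieces. *)
Definition RS_sum (f V : R -> R) (a b : R) (n : nat) : R :=
  let h := (b - a) / INR (S n) in
  sum_f_R0 (fun k => f (a + INR (S k) * h) *
                     (V (a + INR (S k) * h) - V (a + INR k * h))) n.

(* Stieltjes integral of a continuous f over (a,b] w.r.t. right-continuous monotone V. *)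
Definition RS_int (f V : R -> R) (a b : R) : R :=
  Lim (fun n => RS_sum f V a b n).

(* Laplace-Stieltjes transform  L_V(t) = \int_{(0,oo)} e^{-t lambda} dV(lambda),
   as the limit of the integrals over (1/(n+1), n+1]. *)
Definition LV (V : R -> R) (t : R) : R :=
  Lim (fun n => RS_int (fun x => exp (- t * x)) V (/ INR (S n)) (INR (S n))).

Definition TV (V : R -> R) (eps : R) : R :=
  epsilon (inhabits 0) (fun t => 0 <= t /\ LV V t <= eps /\
     forall t', 0 <= t' -> LV V t' <= eps -> t <= t').

Definition lamV (V : R -> R) (c : R) : R :=
  Inf (fun x => 0 < x /\ c < V x).

Definition tauV (V : R -> R) (c : R) : R :=
  Sup (fun y => exists x, lamV V c <= x /\ 0 < x /\ y = ln (1 + V x) / x).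

(* Main.v *)
Require Import Defs.
From Stdlib Require Import Reals Lra Lia ClassicalEpsilon Classical Arith.
Open Scope R_scope.

Fixpoint sumN (g : nat -> R) (N : nat) : R :=
  match N with O => 0 | S n => sumN g n + g n end.

Lemma sum_f_sumN g n : sum_f_R0 g n = sumN g (S n).
Proof. induction n; simpl in *; [lra| rewrite IHn; simpl; ring]. Qed.

Lemma sumN_le g1 g2 N : (forall k, (k < N)%nat -> g1 k <= g2 k) -> sumN g1 N <= sumN g2 N.
Proof. induction N; simpl; intros H; [lra|]. pose proof (H N (Nat.lt_succ_diag_r N)).
  assert (sumN g1 N <= sumN g2 N) by (apply IHN; intros; apply H; lia). lra. Qed.

Lemma sumN_ext g1 g2 N : (forall k, (k < N)%nat -> g1 k = g2 k) -> sumN g1 N = sumN g2 N.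
Proof. intros H; apply Rle_antisym; apply sumN_le; intros k Hk; rewrite H; auto; lra. Qed.

Lemma sumN_plus g1 g2 N : sumN (fun k => g1 k + g2 k) N = sumN g1 N + sumN g2 N.
Proof. induction N; simpl; [lra|rewrite IHN; ring]. Qed.

Lemma sumN_minus g1 g2 N : sumN (fun k => g1 k - g2 k) N = sumN g1 N - sumN g2 N.
Proof. induction N; simpl; [lra|rewrite IHN; ring]. Qed.

Lemma sumN_scal K g N : sumN (fun k => K * g k) N = K * sumN g N.
Proof. induction N; simpl; [lra|rewrite IHN; ring]. Qed.

Lemma sumN_tele u N : sumN (fun k => u (S k) - u k) N = u N - u O.
Proof. induction N; simpl; [lra|rewrite IHN; ring]. Qed.

Lemma sumN_shift g N : sumN g (S N) = g O + sumN (fun k => g (S k)) N.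
Proof. induction N; simpl in *; [lra|]. rewrite IHN. ring. Qed.

Lemma sumN_nonneg g N : (forall k, (k < N)%nat -> 0 <= g k) -> 0 <= sumN g N.
Proof. intros H. replace 0 with (sumN (fun _ => 0) N). apply sumN_le; auto.
  induction N; simpl; auto. rewrite IHN; [lra|intros; apply H; lia]. Qed.

Definition Vmon (V : R -> R) := forall x y, 0 < x -> x <= y -> V x <= V y.
Definition fmon (f : R -> R) := forall x y, 0 < x -> x <= y -> f y <= f x.
Definition fpos (f : R -> R) := forall x, 0 < x -> 0 <= f x.
Definition pmon (x : nat -> R) N := forall i j, (i <= j <= N)%nat -> x i <= x j.

Definition Lsum f V (x : nat -> R) N := sumN (fun k => f (x (S k)) * (V (x (S k)) - V (x k))) N.
Definition Usum f V (x : nat -> R) N := sumN (fun k => f (x k) * (V (x (S k)) - V (x k))) N.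
Definition Uc f V (q : nat -> R) M c :=
  sumN (fun j => f (q j) * (V (Rmin (q (S j)) c) - V (Rmin (q j) c))) M.

Lemma pmon_le x N i j : pmon x N -> (i <= j <= N)%nat -> x i <= x j.
Proof. intros H Hij; apply H; auto. Qed.

Lemma pmon_S x N : pmon x (S N) -> pmon x N.
Proof. intros H i j Hij; apply H; lia. Qed.

Lemma psi_mono V c' a z1 z2 : Vmon V -> 0 < a -> a <= z1 -> z1 <= z2 -> a <= c' ->
  V z1 - V (Rmin z1 c') <= V z2 - V (Rmin z2 c').
Proof. intros HV Ha H1 H2 H3. unfold Rmin.
  destruct (Rle_dec z1 c'), (Rle_dec z2 c').
  - lra.
  - assert (V c' <= V z2) by (apply HV; lra). lra.
  - lra.
  - assert (V z1 <= V z2) by (apply HV; lra). lra.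
Qed.

Lemma phi_mono V c c' a z1 z2 : Vmon V -> 0 < a -> a <= z1 -> z1 <= z2 -> a <= c' -> c' <= c ->
  V (Rmin z1 c) - V (Rmin z1 c') <= V (Rmin z2 c) - V (Rmin z2 c').
Proof. intros HV Ha H1 H2 H3 H4.
  assert (E: forall z, Rmin z c' = Rmin (Rmin z c) c').
  { intros z; unfold Rmin; repeat destruct Rle_dec; lra. }
  rewrite (E z1), (E z2). apply (psi_mono V c' a); auto.
  - unfold Rmin; destruct Rle_dec; lra.
  - unfold Rmin; repeat destruct Rle_dec; lra.
Qed.

Lemma Uc_diff f V q M a d c c' : Vmon V -> fmon f -> 0 < a -> q O = a -> q M = d -> pmon q M ->
  a <= c' -> c' <= c -> c <= d ->
  Uc f V q M c' + f c * (V c - V c') <= Uc f V q M c.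
Proof. intros HV Hf Ha Hq0 HqM Hq H1 H2 H3.
  set (phi := fun z => V (Rmin z c) - V (Rmin z c')).
  assert (Hr: f c * (V c - V c') = sumN (fun j => f c * (phi (q (S j)) - phi (q j))) M).
  { rewrite sumN_scal, (sumN_tele (fun j => phi (q j))). unfold phi. rewrite HqM, Hq0.
    unfold Rmin; repeat destruct Rle_dec; try lra; try (replace d with c by lra); try (replace c' with c by lra); ring. }
  assert (Hd: Uc f V q M c - Uc f V q M c' = sumN (fun j => f (q j) * (phi (q (S j)) - phi (q j))) M).
  { unfold Uc. rewrite <- sumN_minus. apply sumN_ext. intros; unfold phi; ring. }
  enough (sumN (fun j => f c * (phi (q (S j)) - phi (q j))) M <=
          sumN (fun j => f (q j) * (phi (q (S j)) - phi (q j))) M) by lra.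
  apply sumN_le. intros j Hj.
  assert (Hqa: a <= q j) by (rewrite <- Hq0; apply Hq; lia).
  assert (Hqq: q j <= q (S j)) by (apply Hq; lia).
  destruct (Rlt_dec (q j) c).
  - assert (f c <= f (q j)) by (apply Hf; lra).
    assert (phi (q j) <= phi (q (S j))) by (apply (phi_mono V c c' a); auto).
    nra.
  - assert (E1: phi (q j) = V c - V c') by (unfold phi, Rmin; repeat destruct Rle_dec; try lra; f_equal; f_equal; lra).
    assert (E2: phi (q (S j)) = V c - V c') by (unfold phi, Rmin; repeat destruct Rle_dec; try lra; f_equal; f_equal; lra).
    rewrite E1, E2. lra.
Qed.
Lemma Uc_nonneg f V q M a c : Vmon V -> fpos f -> 0 < a -> q O = a -> pmon q M -> a <= c ->
  0 <= Uc f V q M c.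
Proof. intros HV Hf Ha Hq0 Hq Hc. apply sumN_nonneg. intros j Hj.
  assert (Hqa: a <= q j) by (rewrite <- Hq0; apply Hq; lia).
  assert (Hqq: q j <= q (S j)) by (apply Hq; lia).
  apply Rmult_le_pos. apply Hf; lra.
  assert (V (Rmin (q j) c) <= V (Rmin (q (S j)) c)).
  { apply HV; unfold Rmin; repeat destruct Rle_dec; lra. } lra.
Qed.

Lemma cmp_LU f V q M a d : Vmon V -> fmon f -> fpos f -> 0 < a -> q O = a -> q M = d -> pmon q M ->
  forall N p, p O = a -> pmon p N -> p N <= d -> Lsum f V p N <= Uc f V q M (p N).
Proof. intros HV Hf Hfp Ha Hq0 HqM Hq N. induction N; intros p Hp0 Hp HpN.
  - unfold Lsum; simpl. rewrite Hp0. apply (Uc_nonneg f V q M a); auto; lra.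
  - unfold Lsum; simpl. fold (Lsum f V p N).
    assert (HpN1: p N <= p (S N)) by (apply Hp; lia).
    assert (Hpa: a <= p N) by (rewrite <- Hp0; apply Hp; lia).
    assert (IH: Lsum f V p N <= Uc f V q M (p N)) by (apply IHN; auto; [apply pmon_S; auto| lra]).
    pose proof (Uc_diff f V q M a d (p (S N)) (p N) HV Hf Ha Hq0 HqM Hq Hpa HpN1 HpN). lra.
Qed.

Lemma Uc_full f V q M a d : q O = a -> q M = d -> pmon q M -> Uc f V q M d = Usum f V q M.
Proof. intros Hq0 HqM Hq. apply sumN_ext. intros j Hj.
  assert (q j <= d) by (rewrite <- HqM; apply Hq; lia).
  assert (q (S j) <= d) by (rewrite <- HqM; apply Hq; lia).
  unfold Rmin; repeat destruct Rle_dec; try lra. Qed.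

Lemma LU f V p N q M a b : Vmon V -> fmon f -> fpos f -> 0 < a ->
  p O = a -> p N = b -> pmon p N -> q O = a -> q M = b -> pmon q M ->
  Lsum f V p N <= Usum f V q M.
Proof. intros. rewrite <- (Uc_full f V q M a b); auto. rewrite <- H4.
  apply (cmp_LU f V q M a b); auto. lra. Qed.

Definition unif a b n k := a + INR k * ((b - a) / INR (S n)).

Lemma RS_Lsum f V a b n : RS_sum f V a b n = Lsum f V (unif a b n) (S n).
Proof. unfold RS_sum. rewrite sum_f_sumN. reflexivity. Qed.

Lemma unif0 a b n : unif a b n O = a.
Proof. unfold unif; simpl; ring. Qed.

Lemma unifN a b n : unif a b n (S n) = b.
Proof. unfold unif. assert (INR (S n) <> 0) by (apply not_0_INR; lia). field; auto. Qed.

Lemma unifS a b n k : unif a b n (S k) = unif a b n k + (b - a) / INR (S n).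
Proof. unfold unif. rewrite S_INR. ring. Qed.

Lemma h_nonneg a b n : a <= b -> 0 <= (b - a) / INR (S n).
Proof. intros. apply Rmult_le_pos; [lra|]. left; apply Rinv_0_lt_compat, lt_0_INR; lia. Qed.

Lemma unif_pmon a b n : a <= b -> pmon (unif a b n) (S n).
Proof. intros Hab i j Hij. unfold unif. pose proof (h_nonneg a b n Hab).
  assert (INR i <= INR j) by (apply le_INR; lia). nra. Qed.

Lemma unif_ge a b n k : a <= b -> a <= unif a b n k.
Proof. intros. unfold unif. pose proof (h_nonneg a b n H). pose proof (pos_INR k). nra. Qed.

Lemma Lsum_Usum_gap f V x N K h : Vmon V -> 0 < x O -> pmon x N ->
  (forall k, (k < N)%nat -> x (S k) = x k + h) ->
  (forall z, 0 < z -> f z - f (z + h) <= K * h) ->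
  Usum f V x N <= Lsum f V x N + K * h * (V (x N) - V (x O)).
Proof. intros HV Hx0 Hx Hs Hf.
  rewrite <- (sumN_tele (fun k => V (x k))). rewrite <- sumN_scal.
  unfold Lsum, Usum. rewrite <- sumN_plus. apply sumN_le. intros k Hk.
  assert (x O <= x k) by (apply Hx; lia). assert (x k <= x (S k)) by (apply Hx; lia).
  assert (V (x k) <= V (x (S k))) by (apply HV; lra).
  rewrite Hs by auto. rewrite Hs in H1, H0 by auto. pose proof (Hf (x k) ltac:(lra)). nra.
Qed.
Lemma Lim_eq u l : Un_cv u l -> Lim u = l.
Proof. intros H. unfold Lim. apply (UL_sequence u); auto.
  apply (epsilon_spec (inhabits 0) (fun l => Un_cv u l)). exists l; auto. Qed.

Lemma big_INR K : exists N, forall n, (N <= n)%nat -> K < INR (S n).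
Proof. destruct (INR_archimed 1 K) as [N HN]; [lra|]. exists N. intros n Hn.
  assert (INR N <= INR n) by (apply le_INR; auto). rewrite S_INR. lra. Qed.

Lemma cv_CinvN C : Un_cv (fun n => C / INR (S n)) 0.
Proof. intros e He. destruct (big_INR (Rabs C / e)) as [N HN]. exists N. intros n Hn.
  specialize (HN n Hn). unfold R_dist. rewrite Rminus_0_r.
  assert (Hp: 0 < INR (S n)) by (apply lt_0_INR; lia).
  assert (E: Rabs (C / INR (S n)) = Rabs C / INR (S n)).
  { unfold Rdiv. rewrite Rabs_mult, Rabs_inv, (Rabs_pos_eq (INR (S n))) by lra. auto. }
  rewrite E. apply (Rmult_lt_reg_r (INR (S n))); auto.
  replace (Rabs C / INR (S n) * INR (S n)) with (Rabs C) by (field; lra).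
  apply (Rmult_lt_compat_r e) in HN; auto.
  replace (Rabs C / e * e) with (Rabs C) in HN by (field; lra). lra. Qed.

Lemma cv_squeeze0 w C : (forall n, 0 <= w n <= C / INR (S n)) -> Un_cv w 0.
Proof. intros H e He. destruct (cv_CinvN C e He) as [N HN]. exists N. intros n Hn.
  specialize (HN n Hn). specialize (H n). unfold R_dist in *. rewrite Rminus_0_r in *.
  rewrite Rabs_pos_eq in * by lra. lra. Qed.

Lemma cv_const K : Un_cv (fun _ => K) K.
Proof. intros e He. exists O. intros. unfold R_dist. rewrite Rminus_diag, Rabs_R0. auto. Qed.

Lemma lim_le_B u L B w : Un_cv u L -> (forall n, u n <= B + w n) -> Un_cv w 0 -> L <= B.
Proof. intros Hu H Hw. replace B with (B + 0) by ring.
  apply (Rle_cv_lim H Hu). apply CV_plus; auto. apply cv_const. Qed.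

Lemma lim_ge_B u L B w : Un_cv u L -> (forall n, B <= u n + w n) -> Un_cv w 0 -> B <= L.
Proof. intros Hu H Hw. replace L with (L + 0) by ring.
  apply (Rle_cv_lim H). apply cv_const. apply CV_plus; auto. Qed.

Lemma RS_conv f V a b K : Vmon V -> fmon f -> fpos f -> 0 <= K ->
  (forall z h, 0 < z -> 0 <= h -> f z - f (z + h) <= K * h) -> 0 < a <= b ->
  Un_cv (RS_sum f V a b) (RS_int f V a b) /\
  (forall p N, p O = a -> p N = b -> pmon p N -> Lsum f V p N <= RS_int f V a b).
Proof. intros HV Hf Hfp HK Hfl [Ha Hab].
  set (L := RS_sum f V a b).
  set (U := fun m => Usum f V (unif a b m) (S m)).
  set (C := K * (b - a) * (V b - V a)).
  assert (HVab: V a <= V b) by (apply HV; lra).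
  assert (HC: 0 <= C) by (unfold C; apply Rmult_le_pos; [apply Rmult_le_pos|]; lra).
  assert (HLU: forall p N m, p O = a -> p N = b -> pmon p N -> Lsum f V p N <= U m).
  { intros p N m H0 H1 H2. apply (LU f V p N _ _ a b); auto.
    apply unif0. apply unifN. apply unif_pmon; lra. }
  assert (Hgap: forall m, U m <= L m + C / INR (S m)).
  { intros m. unfold U, L. rewrite RS_Lsum.
    pose proof (Lsum_Usum_gap f V (unif a b m) (S m) K ((b - a) / INR (S m)) HV) as G.
    rewrite unifN, unif0 in G. replace (C / INR (S m)) with (K * ((b - a) / INR (S m)) * (V b - V a)).
    apply G; auto. apply unif_pmon; lra. intros; apply unifS.
    intros; apply Hfl; auto. apply h_nonneg; lra. unfold C, Rdiv; ring. }
  assert (HLL: forall m k, L m <= U k).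
  { intros m k. unfold L. rewrite RS_Lsum. apply HLU. apply unif0. apply unifN. apply unif_pmon; lra. }
  assert (Hc: Cauchy_crit L).
  { intros e He. destruct (cv_CinvN C e He) as [N HN]. exists N. intros n m Hn Hm.
    specialize (HN n Hn) as Hn'. specialize (HN m Hm) as Hm'. unfold R_dist in *.
    rewrite Rminus_0_r in *. 
    assert (0 <= C / INR (S n)) by (apply Rmult_le_pos; auto; left; apply Rinv_0_lt_compat, lt_0_INR; lia).
    assert (0 <= C / INR (S m)) by (apply Rmult_le_pos; auto; left; apply Rinv_0_lt_compat, lt_0_INR; lia).
    rewrite Rabs_pos_eq in Hn', Hm' by lra.
    pose proof (HLL n m). pose proof (HLL m n). pose proof (Hgap n). pose proof (Hgap m).
    apply Rabs_def1; lra. }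
  destruct (R_complete L Hc) as [l Hl].
  assert (HI: RS_int f V a b = l) by (apply Lim_eq; auto).
  rewrite HI. split; auto.
  intros p N H0 H1 H2. apply (lim_ge_B L l (Lsum f V p N) (fun m => C / INR (S m))); auto.
  - intros m. pose proof (HLU p N m H0 H1 H2). pose proof (Hgap m). lra.
  - apply cv_CinvN.
Qed.
Lemma exp_le x y : x <= y -> exp x <= exp y.
Proof. intros [H|H]; [left; apply exp_increasing; auto| subst; lra]. Qed.

Definition ef t := fun x => exp (- t * x).

Lemma ef_mon t : 0 <= t -> fmon (ef t).
Proof. intros Ht x y Hx Hxy. unfold ef. apply exp_le. nra. Qed.

Lemma ef_pos t : fpos (ef t).
Proof. intros x _. unfold ef. left; apply exp_pos. Qed.

Lemma ef_le1 t z : 0 <= t -> 0 < z -> ef t z <= 1.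
Proof. intros. unfold ef. rewrite <- exp_0. apply exp_le. nra. Qed.

Lemma ef_lip t z h : 0 <= t -> 0 < z -> 0 <= h -> ef t z - ef t (z + h) <= t * h.
Proof. intros Ht Hz Hh. unfold ef.
  replace (- t * (z + h)) with (- t * z + - (t * h)) by ring. rewrite exp_plus.
  pose proof (ef_le1 t z Ht Hz). unfold ef in H. pose proof (exp_pos (- t * z)).
  pose proof (exp_ineq1_le (- (t * h))). assert (exp (- (t*h)) <= 1) by (rewrite <- exp_0; apply exp_le; nra).
  nra. Qed.

Definition aN n := / INR (S n).
Definition bN n := INR (S n).

Lemma abN n : 0 < aN n <= bN n.
Proof. unfold aN, bN. assert (1 <= INR (S n)) by (rewrite S_INR; pose proof (pos_INR n); lra).
  split. apply Rinv_0_lt_compat; lra. apply Rle_trans with 1; [|lra].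
  replace 1 with (/ 1) by apply Rinv_1. apply Rinv_le_contravar; lra. Qed.

Definition Itn V t n := RS_int (ef t) V (aN n) (bN n).

Lemma LV_unfold V t : LV V t = Lim (Itn V t).
Proof. reflexivity. Qed.

Lemma Itn_conv V t n : Vmon V -> 0 <= t ->
  Un_cv (RS_sum (ef t) V (aN n) (bN n)) (Itn V t n) /\
  (forall p N, p O = aN n -> p N = bN n -> pmon p N -> Lsum (ef t) V p N <= Itn V t n).
Proof. intros HV Ht. apply (RS_conv (ef t) V (aN n) (bN n) t HV (ef_mon t Ht) (ef_pos t) Ht).
  intros; apply ef_lip; auto. apply abN. Qed.

Lemma Lsum_mono f1 f2 V x N : Vmon V -> 0 < x O -> pmon x N ->
  (forall k, (k < N)%nat -> f1 (x (S k)) <= f2 (x (S k))) -> Lsum f1 V x N <= Lsum f2 V x N.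
Proof. intros HV Hx0 Hx H. apply sumN_le. intros k Hk.
  assert (x O <= x k) by (apply Hx; lia). assert (x k <= x (S k)) by (apply Hx; lia).
  assert (V (x k) <= V (x (S k))) by (apply HV; lra). specialize (H k Hk). nra. Qed.

Lemma Lsum_plus f1 f2 V x N : Lsum (fun z => f1 z + f2 z) V x N = Lsum f1 V x N + Lsum f2 V x N.
Proof. unfold Lsum. rewrite <- sumN_plus. apply sumN_ext; intros; ring. Qed.

Lemma Lsum_scal K f V x N : Lsum (fun z => K * f z) V x N = K * Lsum f V x N.
Proof. unfold Lsum. rewrite <- sumN_scal. apply sumN_ext; intros; ring. Qed.

Lemma Lsum_one V x N : Lsum (fun _ => 1) V x N = V (x N) - V (x O).
Proof. unfold Lsum. rewrite <- (sumN_tele (fun k => V (x k))). apply sumN_ext; intros; ring. Qed.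

Lemma Lsum_nonneg f V x N : Vmon V -> 0 < x O -> pmon x N -> (forall z, 0 < z -> 0 <= f z) ->
  0 <= Lsum f V x N.
Proof. intros HV Hx0 Hx H. apply sumN_nonneg. intros k Hk.
  assert (x O <= x k) by (apply Hx; lia). assert (x k <= x (S k)) by (apply Hx; lia).
  assert (V (x k) <= V (x (S k))) by (apply HV; lra). specialize (H (x (S k)) ltac:(lra)). nra. Qed.

Definition ind p z := if Rlt_dec z p then 1 else 0.

Lemma ind_01 p z : 0 <= ind p z <= 1.
Proof. unfold ind; destruct Rlt_dec; lra. Qed.

Lemma Lsum_ind V x N p C : Vmon V -> 0 < x O -> pmon x N -> (forall z, 0 < z -> 0 <= V z) ->
  (forall z, 0 < z < p -> V z <= C) -> 0 <= C -> Lsum (ind p) V x N <= C.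
Proof. intros HV Hx0 Hx Hnn HC HC0.
  assert (forall N, pmon x N -> Lsum (ind p) V x N <=
     (if Rlt_dec (x N) p then V (x N) - V (x O) else Rmax 0 (C - V (x O)))).
  { clear N Hx. induction N; intros Hx.
    - unfold Lsum; simpl. destruct Rlt_dec. lra. apply Rmax_l.
    - unfold Lsum; simpl; fold (Lsum (ind p) V x N).
      specialize (IHN (pmon_S _ _ Hx)).
      assert (x O <= x N) by (apply Hx; lia). assert (x N <= x (S N)) by (apply Hx; lia).
      unfold ind at 2. destruct (Rlt_dec (x (S N)) p); destruct (Rlt_dec (x N) p) in IHN; try lra.
      + assert (V (x N) <= C) by (apply HC; lra). pose proof (Rmax_r 0 (C - V (x O))). lra. }
  specialize (H N Hx). pose proof (Hnn _ Hx0). assert (x O <= x N) by (apply Hx; lia).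
  destruct Rlt_dec in H.
  - assert (V (x N) <= C) by (apply HC; lra). lra.
  - unfold Rmax in H; destruct Rle_dec in H; lra.
Qed.
Lemma sumN_S g N : sumN g (S N) = sumN g N + g N.
Proof. reflexivity. Qed.

Definition ext (a' b' : R) (p : nat -> R) N k :=
  match k with O => a' | S k' => if le_lt_dec k' N then p k' else b' end.

Lemma Lsum_ext f V a' b' p N :
  Lsum f V (ext a' b' p N) (S (S N)) =
  f (p O) * (V (p O) - V a') + Lsum f V p N + f b' * (V b' - V (p N)).
Proof. unfold Lsum. rewrite sumN_S, sumN_shift.
  assert (E: sumN (fun k => f (ext a' b' p N (S (S k))) * (V (ext a' b' p N (S (S k))) - V (ext a' b' p N (S k)))) N
    = sumN (fun k => f (p (S k)) * (V (p (S k)) - V (p k))) N).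
  { apply sumN_ext. intros k Hk. unfold ext; cbv beta iota. destruct (le_lt_dec (S k) N); [|lia].
    destruct (le_lt_dec k N); [|lia]. auto. }
  rewrite E. unfold ext; cbv beta iota. destruct (le_lt_dec O N); [|lia]. destruct (le_lt_dec (S N) N); [lia|].
  destruct (le_lt_dec N N); [|lia]. ring. Qed.

Lemma ext_pmon a' b' p N : pmon p N -> a' <= p O -> p N <= b' -> pmon (ext a' b' p N) (S (S N)).
Proof. intros Hp H0 H1 i j Hij. destruct i as [|i]; destruct j as [|j]; unfold ext; cbv beta iota; try lra; try lia.
  - destruct le_lt_dec. assert (p O <= p j) by (apply Hp; lia). lra.
    assert (p O <= p N) by (apply Hp; lia). lra.
  - destruct (le_lt_dec i N), (le_lt_dec j N); try lia.
    + apply Hp; lia.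
    + assert (p i <= p N) by (apply Hp; lia). lra.
    + lra.
Qed.

Lemma Itn_mono V t n : Vmon V -> (forall z, 0 < z -> 0 <= V z) -> 0 <= t ->
  Itn V t n <= Itn V t (S n).
Proof. intros HV Hnn Ht. destruct (Itn_conv V t n HV Ht) as [Hc _].
  destruct (Itn_conv V t (S n) HV Ht) as [_ Hp].
  apply (lim_le_B _ _ _ (fun _ => 0) Hc); [|apply cv_const].
  intros m. rewrite Rplus_0_r. rewrite RS_Lsum.
  pose proof (abN n) as [A1 A2]. pose proof (abN (S n)) as [B1 B2].
  assert (Ha: aN (S n) <= aN n).
  { unfold aN. apply Rinv_le_contravar. apply lt_0_INR; lia. apply le_INR; lia. }
  assert (Hb: bN n <= bN (S n)) by (unfold bN; apply le_INR; lia).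
  apply Rle_trans with (Lsum (ef t) V (ext (aN (S n)) (bN (S n)) (unif (aN n) (bN n) m) (S m)) (S (S (S m)))).
  - rewrite Lsum_ext. rewrite unif0, unifN.
    assert (0 <= ef t (aN n) * (V (aN n) - V (aN (S n)))).
    { apply Rmult_le_pos. apply ef_pos; lra. assert (V (aN (S n)) <= V (aN n)) by (apply HV; lra). lra. }
    assert (0 <= ef t (bN (S n)) * (V (bN (S n)) - V (bN n))).
    { apply Rmult_le_pos. apply ef_pos; lra. assert (V (bN n) <= V (bN (S n))) by (apply HV; lra). lra. }
    lra.
  - apply Hp. reflexivity. unfold ext; cbv beta iota. destruct (le_lt_dec (S (S m)) (S m)); [lia|auto].
    apply ext_pmon. apply unif_pmon; lra. rewrite unif0; lra. rewrite unifN; lra.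
Qed.

Lemma Itn_le V t n l : Vmon V -> (forall z, 0 < z -> 0 <= V z) -> (forall z, 0 < z -> V z <= l) -> 0 <= t ->
  0 <= Itn V t n <= l.
Proof. intros HV Hnn Hl Ht. destruct (Itn_conv V t n HV Ht) as [Hc _].
  pose proof (abN n) as [A1 A2]. split.
  - apply (lim_ge_B _ _ _ (fun _ => 0) Hc); [|apply cv_const].
    intros m. rewrite Rplus_0_r, RS_Lsum. apply Lsum_nonneg; auto. rewrite unif0; auto.
    apply unif_pmon; lra. intros; apply ef_pos; auto.
  - apply (lim_le_B _ _ _ (fun _ => 0) Hc); [|apply cv_const].
  intros m. rewrite Rplus_0_r, RS_Lsum.
  apply Rle_trans with (Lsum (fun _ => 1) V (unif (aN n) (bN n) m) (S m)).
  apply Lsum_mono; auto. rewrite unif0; auto. apply unif_pmon; lra.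
  intros. apply ef_le1; auto. apply Rlt_le_trans with (aN n); auto. apply unif_ge; lra.
  rewrite Lsum_one, unif0, unifN. pose proof (Hl (bN n) ltac:(lra)). pose proof (Hnn (aN n) A1). lra.
Qed.

Lemma LV_conv V t l : Vmon V -> (forall z, 0 < z -> 0 <= V z) -> (forall z, 0 < z -> V z <= l) -> 0 <= t ->
  Un_cv (Itn V t) (LV V t) /\ (forall n, Itn V t n <= LV V t) /\ 0 <= LV V t <= l.
Proof. intros HV Hnn Hl Ht.
  assert (Hg: Un_growing (Itn V t)) by (intros n; apply Itn_mono; auto).
  destruct (growing_cv (Itn V t) Hg) as [L HL].
  { exists l. intros x [n ->]. apply (Itn_le V t n l); auto. }
  assert (E: LV V t = L) by (rewrite LV_unfold; apply Lim_eq; auto).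
  rewrite E. split; auto. split. intros n; apply growing_ineq; auto.
  split.
  - apply (lim_ge_B _ _ _ (fun _ => 0) HL); [|apply cv_const]. intros n. pose proof (Itn_le V t n l); intuition lra.
  - apply (lim_le_B _ _ _ (fun _ => 0) HL); [|apply cv_const]. intros n. pose proof (Itn_le V t n l); intuition lra.
Qed.
Lemma upart n m : 0 < unif (aN n) (bN n) m O /\ pmon (unif (aN n) (bN n) m) (S m) /\
  unif (aN n) (bN n) m (S m) = bN n /\ (forall k, aN n <= unif (aN n) (bN n) m k) /\
  unif (aN n) (bN n) m O = aN n.
Proof. pose proof (abN n) as [A1 A2]. rewrite unif0, unifN. repeat split; auto.
  apply unif_pmon; lra. intros; apply unif_ge; lra. Qed.

Lemma LV_G V l t t' K B : Vmon V -> (forall z, 0 < z -> 0 <= V z) -> (forall z, 0 < z -> V z <= l) ->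
  0 <= t -> 0 <= t' ->
  (forall n m, RS_sum (ef t) V (aN n) (bN n) m <= B + K * RS_sum (ef t') V (aN n) (bN n) m) ->
  LV V t <= B + K * LV V t'.
Proof. intros HV Hnn Hl Ht Ht' H.
  assert (H2: forall n, Itn V t n <= B + K * Itn V t' n).
  { intros n. apply (Rle_cv_lim (H n)). apply Itn_conv; auto.
    apply CV_plus. apply cv_const. apply CV_mult. apply cv_const. apply Itn_conv; auto. }
  destruct (LV_conv V t l) as [C1 _]; auto. destruct (LV_conv V t' l) as [C2 _]; auto.
  apply (Rle_cv_lim H2 C1). apply CV_plus. apply cv_const. apply CV_mult. apply cv_const. auto.
Qed.

Lemma approx_le A B : (forall e, 0 < e -> A - e <= B) -> A <= B.
Proof. intros H. destruct (Rle_dec A B); auto. specialize (H ((A - B)/2)). lra. Qed.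

Lemma LV_lower V l t y : Vmon V -> (forall z, 0 < z -> 0 <= V z) -> (forall z, 0 < z -> V z <= l) ->
  (forall e, 0 < e -> exists d, 0 < d /\ forall y, 0 < y < d -> Rabs (V y) < e) ->
  0 <= t -> 0 < y -> exp (- t * y) * V y <= LV V t.
Proof. intros HV Hnn Hl H0 Ht Hy. apply approx_le. intros e He.
  destruct (H0 e He) as [d [Hd Hd']].
  set (m := Rmin d y). assert (Hm: 0 < m) by (unfold m, Rmin; destruct Rle_dec; lra).
  destruct (big_INR (Rmax y (/ m))) as [n Hn]. specialize (Hn n (le_n n)).
  pose proof (Rmax_l y (/ m)). pose proof (Rmax_r y (/ m)).
  assert (Ha: aN n < m).
  { unfold aN. replace m with (/ / m) by (field; lra). apply Rinv_lt_contravar.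
    apply Rmult_lt_0_compat. apply Rinv_0_lt_compat; auto. lra. lra. }
  pose proof (abN n) as [A1 A2].
  assert (Hay: aN n < y) by (unfold m, Rmin in Ha; destruct Rle_dec in Ha; lra).
  assert (Had: aN n < d) by (unfold m, Rmin in Ha; destruct Rle_dec in Ha; lra).
  assert (Hyb: y <= bN n) by (unfold bN; lra).
  set (p := fun k => match k with O => aN n | S O => y | _ => bN n end).
  assert (Hp: pmon p 2).
  { intros i j Hij. destruct i as [|[|i]]; destruct j as [|[|j]]; simpl; lra || lia. }
  destruct (Itn_conv V t n HV Ht) as [_ HI].
  destruct (LV_conv V t l) as [_ [HL _]]; auto.
  specialize (HI p 2%nat eq_refl eq_refl Hp). specialize (HL n).
  unfold Lsum in HI. simpl in HI.
  specialize (Hd' (aN n) (conj A1 Had)). rewrite Rabs_pos_eq in Hd' by (apply Hnn; lra).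
  assert (V y <= V (bN n)) by (apply HV; lra).
  pose proof (ef_pos t (bN n) ltac:(lra)). pose proof (ef_le1 t y Ht Hy). pose proof (ef_pos t y Hy).
  assert (0 <= ef t (bN n) * (V (bN n) - V y)) by (apply Rmult_le_pos; lra).
  unfold ef in *. pose proof (Hnn (aN n) A1). nra.
Qed.

Lemma LV_lip V l t t' : Vmon V -> (forall z, 0 < z -> 0 <= V z) -> (forall z, 0 < z -> V z <= l) ->
  0 < t -> t <= t' -> LV V t <= LV V t' + (t' - t) / t * l.
Proof. intros HV Hnn Hl Ht Htt.
  rewrite Rplus_comm, <- (Rmult_1_l (LV V t')).
  apply (LV_G V l); auto; try lra. intros n m. rewrite !RS_Lsum.
  destruct (upart n m) as [P0 [P1 [P2 [P3 P4]]]].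
  set (K := (t' - t) / t). assert (HK: 0 <= K) by (unfold K; apply Rmult_le_pos; [lra| left; apply Rinv_0_lt_compat; lra]).
  apply Rle_trans with (Lsum (fun z => ef t' z + K * 1) V (unif (aN n) (bN n) m) (S m)).
  - apply Lsum_mono; auto. intros k Hk.
    assert (Hz: 0 < unif (aN n) (bN n) m (S k)) by (pose proof (P3 (S k)); lra).
    set (z := unif (aN n) (bN n) m (S k)) in *. unfold ef.
    replace (- t * z) with (- t' * z + (t' - t) * z) by ring. rewrite exp_plus.
    assert (E1: exp (- t' * z) = exp (- t * z) * exp (- ((t' - t) * z))).
    { rewrite <- exp_plus. f_equal. ring. }
    pose proof (exp_ineq1_le (- ((t' - t) * z))).
    pose proof (exp_ineq1_le (t * z)).
    assert (E2: exp (- t * z) * exp (t * z) = 1) by (rewrite <- exp_plus, <- exp_0; f_equal; ring).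
    assert (E3: exp (- t' * z + (t' - t) * z) = exp (- t * z)) by (f_equal; ring).
    rewrite <- exp_plus, E3. rewrite E1.
    assert (H4: exp (- t * z) * (t * z) <= 1).
    { pose proof (exp_pos (- t * z)). nra. }
    assert (H5: exp (- t * z) * z <= / t).
    { apply (Rmult_le_reg_l t); auto. rewrite <- Rinv_r_sym by lra. nra. }
    pose proof (exp_pos (- t * z)). unfold K, Rdiv. nra.
  - rewrite Lsum_plus, Lsum_scal, Lsum_one. rewrite P2, P4.
    pose proof (Hl (bN n) ltac:(pose proof (abN n); lra)). pose proof (Hnn (aN n) ltac:(pose proof (abN n); lra)).
    nra.
Qed.
Lemma LV_split V l t p C : Vmon V -> (forall z, 0 < z -> 0 <= V z) -> (forall z, 0 < z -> V z <= l) ->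
  0 <= t -> 0 <= C -> (forall z, 0 < z < p -> V z <= C) -> LV V t <= C + exp (- t * p) * l.
Proof. intros HV Hnn Hl Ht HC Hp.
  replace (C + exp (- t * p) * l) with (C + exp (- t * p) * l + 0 * LV V 0) by ring.
  apply (LV_G V l); auto; try lra. intros n m. rewrite !RS_Lsum.
  destruct (upart n m) as [P0 [P1 [P2 [P3 P4]]]].
  assert (0 <= Lsum (ef 0) V (unif (aN n) (bN n) m) (S m)) by (apply Lsum_nonneg; auto; intros; apply ef_pos; auto).
  apply Rle_trans with (Lsum (fun z => ind p z + exp (- t * p) * 1) V (unif (aN n) (bN n) m) (S m)).
  - apply Lsum_mono; auto. intros k Hk.
    assert (Hz: 0 < unif (aN n) (bN n) m (S k)) by (pose proof (P3 (S k)); pose proof (abN n); lra).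
    set (z := unif (aN n) (bN n) m (S k)) in *. pose proof (ef_le1 t z Ht Hz).
    pose proof (exp_pos (- t * p)). unfold ind; destruct Rlt_dec. lra.
    unfold ef. assert (exp (- t * z) <= exp (- t * p)) by (apply exp_le; nra). lra.
  - rewrite Lsum_plus, Lsum_scal, Lsum_one. rewrite P2, P4.
    pose proof (Hl (bN n) ltac:(pose proof (abN n); lra)). pose proof (Hnn (aN n) ltac:(pose proof (abN n); lra)).
    pose proof (Lsum_ind V (unif (aN n) (bN n) m) (S m) p C HV P0 P1 Hnn Hp HC).
    pose proof (exp_pos (- t * p)). nra.
Qed.

Lemma LV_split3 V l u T l1 l2 c1 c2 : Vmon V -> (forall z, 0 < z -> 0 <= V z) -> (forall z, 0 < z -> V z <= l) ->
  0 <= T -> T <= u -> 0 <= l1 -> 0 <= l2 -> 0 <= c1 -> 0 <= c2 ->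
  (forall z, 0 < z < l1 -> V z <= c1) -> (forall z, 0 < z < l2 -> V z <= c2) ->
  LV V u <= c1 + exp (- u * l1) * c2 + exp (- (u - T) * l2) * LV V T.
Proof. intros HV Hnn Hl HT HTu H1 H2 Hc1 Hc2 Hv1 Hv2.
  apply (LV_G V l); auto; try lra. intros n m. rewrite !RS_Lsum.
  destruct (upart n m) as [P0 [P1 [P2 [P3 P4]]]].
  pose proof (Lsum_ind V (unif (aN n) (bN n) m) (S m) l1 c1 HV P0 P1 Hnn Hv1 Hc1).
  pose proof (Lsum_ind V (unif (aN n) (bN n) m) (S m) l2 c2 HV P0 P1 Hnn Hv2 Hc2).
  pose proof (exp_pos (- u * l1)).
  apply Rle_trans with (Lsum (fun z => ind l1 z + exp (- u * l1) * ind l2 z + exp (- (u - T) * l2) * ef T z) V (unif (aN n) (bN n) m) (S m)).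
  - apply Lsum_mono; auto. intros k Hk.
    assert (Hz: 0 < unif (aN n) (bN n) m (S k)) by (pose proof (P3 (S k)); pose proof (abN n); lra).
    set (z := unif (aN n) (bN n) m (S k)) in *.
    pose proof (ind_01 l1 z). pose proof (ind_01 l2 z). pose proof (ef_pos T z Hz).
    pose proof (exp_pos (- (u - T) * l2)). pose proof (ef_le1 u z ltac:(lra) Hz).
    unfold ind at 1; destruct (Rlt_dec z l1). nra.
    unfold ind; destruct (Rlt_dec z l2).
    + unfold ef in *. assert (exp (- u * z) <= exp (- u * l1)) by (apply exp_le; nra). nra.
    + unfold ef in *. replace (- u * z) with (- (u - T) * z + - T * z) by ring. rewrite exp_plus.
      assert (exp (- (u - T) * z) <= exp (- (u - T) * l2)) by (apply exp_le; nra).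
      pose proof (exp_pos (- T * z)). pose proof (exp_pos (- (u - T) * z)). nra.
  - rewrite !Lsum_plus, !Lsum_scal. nra.
Qed.
Lemma abel f V x N p : 0 < x O -> pmon x N -> fpos f -> (forall z, 0 < z -> 0 <= V z) ->
  Lsum (fun z => (1 - ind p z) * f z) V x N <=
  (1 - ind p (x N)) * f (x N) * V (x N) +
  sumN (fun k => (1 - ind p (x k)) * V (x k) * (f (x k) - f (x (S k)))) N.
Proof. intros Hx0 Hx Hf Hnn. induction N.
  - unfold Lsum; simpl. pose proof (Hf _ Hx0). pose proof (Hnn _ Hx0). pose proof (ind_01 p (x O)).
    assert (0 <= (1 - ind p (x O)) * f (x O)) by nra. nra.
  - unfold Lsum in *; rewrite !sumN_S. specialize (IHN (pmon_S _ _ Hx)).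
    assert (x O <= x N) by (apply Hx; lia). assert (x N <= x (S N)) by (apply Hx; lia).
    pose proof (Hf (x N) ltac:(lra)). pose proof (Hf (x (S N)) ltac:(lra)).
    pose proof (Hnn (x N) ltac:(lra)). pose proof (Hnn (x (S N)) ltac:(lra)).
    unfold ind in *. destruct (Rlt_dec (x (S N)) p); destruct (Rlt_dec (x N) p); try lra; nra.
Qed.

Lemma tele_ind g x N p : 0 < p -> 0 < x O -> pmon x N -> fmon g ->
  sumN (fun k => (1 - ind p (x k)) * (g (x k) - g (x (S k)))) N <= g p - g (Rmax p (x N)).
Proof. intros Hp Hx0 Hx Hg. induction N.
  - simpl. assert (g (Rmax p (x O)) <= g p) by (apply Hg; auto; apply Rmax_l). lra.
  - rewrite sumN_S. specialize (IHN (pmon_S _ _ Hx)).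
    assert (x O <= x N) by (apply Hx; lia). assert (x N <= x (S N)) by (apply Hx; lia).
    unfold ind at 2. destruct (Rlt_dec (x N) p).
    + rewrite Rmax_left in IHN by lra.
      assert (g (Rmax p (x (S N))) <= g p) by (apply Hg; auto; apply Rmax_l). lra.
    + rewrite Rmax_right in IHN by lra. rewrite Rmax_right by lra. lra.
Qed.

Lemma LV_abel V l c p tau s : Vmon V -> (forall z, 0 < z -> 0 <= V z) -> (forall z, 0 < z -> V z <= l) ->
  0 < p -> 0 <= c -> 0 <= tau -> 0 < s ->
  (forall z, 0 < z < p -> V z <= c) -> (forall z, p <= z -> V z <= exp (tau * z)) ->
  LV V (tau + s) <= c + (tau + s) / s * exp (- s * p).
Proof. intros HV Hnn Hl Hp Hc Htau Hs Hv1 Hv2. set (u := tau + s).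
  assert (Hu: 0 < u) by (unfold u; lra).
  assert (Hfin: forall n m, RS_sum (ef u) V (aN n) (bN n) m <=
     c + exp (- u * bN n) * l + u / s * exp (- s * p) + u * exp (- s * p) * (bN n - aN n) / INR (S m)).
  { intros n m. rewrite RS_Lsum. destruct (upart n m) as [P0 [P1 [P2 [P3 P4]]]].
    pose proof (abN n) as [A1 A2].
    set (x := unif (aN n) (bN n) m) in *. set (h := (bN n - aN n) / INR (S m)).
    assert (Hh: 0 <= h) by (apply h_nonneg; lra).
    assert (Hxs: forall k, x (S k) = x k + h) by (intros; apply unifS).
    assert (Hxp: forall k, 0 < x k) by (intros k; pose proof (P3 k); lra).
    apply Rle_trans with (Lsum (fun z => ind p z + (1 - ind p z) * ef u z) V x (S m)).
    { apply Lsum_mono; auto. intros k Hk. pose proof (ef_le1 u (x (S k)) ltac:(lra) (Hxp _)).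
      unfold ind; destruct Rlt_dec; lra. }
    rewrite Lsum_plus.
    pose proof (Lsum_ind V x (S m) p c HV P0 P1 Hnn Hv1 Hc).
    pose proof (abel (ef u) V x (S m) p P0 P1 (ef_pos u) Hnn) as HA.
    set (R' := u / s * (1 + s * h)).
    assert (HB: sumN (fun k => (1 - ind p (x k)) * V (x k) * (ef u (x k) - ef u (x (S k)))) (S m)
       <= R' * exp (- s * p)).
    { apply Rle_trans with (sumN (fun k => R' * ((1 - ind p (x k)) * (ef s (x k) - ef s (x (S k))))) (S m)).
      - apply sumN_le. intros k Hk. unfold ind. destruct Rlt_dec. lra.
        rewrite Rminus_0_r, !Rmult_1_l.
        assert (Hz: p <= x k) by lra. specialize (Hv2 _ Hz). pose proof (Hnn _ (Hxp k)).
        rewrite Hxs. unfold ef.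
        replace (- u * (x k + h)) with (- u * x k + - (u * h)) by ring.
        replace (- s * (x k + h)) with (- s * x k + - (s * h)) by ring.
        rewrite !exp_plus.
        assert (E: exp (tau * x k) * exp (- u * x k) = exp (- s * x k)).
        { rewrite <- exp_plus. f_equal. unfold u. ring. }
        pose proof (exp_ineq1_le (- (u * h))). pose proof (exp_ineq1_le (s * h)).
        assert (E2: exp (- (s * h)) * exp (s * h) = 1) by (rewrite <- exp_plus, <- exp_0; f_equal; ring).
        assert (Huh: exp (- (u * h)) <= 1) by (rewrite <- exp_0; apply exp_le; nra).
        pose proof (exp_pos (- (s * h))). pose proof (exp_pos (s * h)). pose proof (exp_pos (- u * x k)).
        pose proof (exp_pos (- s * x k)).
        assert (K1: (1 + s * h) * exp (- (s * h)) <= 1) by nra.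
        assert (K2: u * h <= R' * (1 - exp (- (s * h)))).
        { unfold R'. replace (u * h) with (u / s * (s * h)) by (field; lra).
          rewrite Rmult_assoc. apply Rmult_le_compat_l. apply Rmult_le_pos; [lra|left; apply Rinv_0_lt_compat; lra].
          nra. }
        assert (K3: V (x k) * (exp (- u * x k) - exp (- u * x k) * exp (- (u * h))) <=
                    exp (tau * x k) * exp (- u * x k) * (1 - exp (- (u * h)))).
        { assert (0 <= exp (- u * x k) * (1 - exp (- (u * h)))) by nra. nra. }
        rewrite E in K3. nra.
      - rewrite sumN_scal. apply Rmult_le_compat_l.
        unfold R'. apply Rmult_le_pos. apply Rmult_le_pos; [lra|left; apply Rinv_0_lt_compat; lra]. nra.
        pose proof (tele_ind (ef s) x (S m) p Hp P0 P1 (ef_mon s ltac:(lra))).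
        pose proof (ef_pos s (Rmax p (x (S m))) ltac:(pose proof (Rmax_l p (x (S m))); lra)).
        unfold ef in *. lra. }
    assert (HT: (1 - ind p (x (S m))) * ef u (x (S m)) * V (x (S m)) <= exp (- u * bN n) * l).
    { rewrite P2. pose proof (ind_01 p (bN n)). pose proof (Hl (bN n) ltac:(lra)).
      pose proof (Hnn (bN n) ltac:(lra)). unfold ef. pose proof (exp_pos (- u * bN n)).
      assert (0 <= exp (- u * bN n) * V (bN n)) by nra. nra. }
    assert (R' * exp (- s * p) = u / s * exp (- s * p) + u * exp (- s * p) * (bN n - aN n) / INR (S m)).
    { unfold R', h. field. split; [|lra]. apply not_0_INR; lia. }
    lra. }
  destruct (LV_conv V u l HV Hnn Hl ltac:(lra)) as [HC _].
  assert (Hl0: 0 <= l) by (pose proof (Hl 1 ltac:(lra)); pose proof (Hnn 1 ltac:(lra)); lra).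
  apply (lim_le_B _ _ _ (fun n => exp (- u * bN n) * l) HC).
  - intros n. destruct (Itn_conv V u n HV ltac:(lra)) as [Hn _].
    apply (lim_le_B _ _ _ (fun m => u * exp (- s * p) * (bN n - aN n) / INR (S m)) Hn).
    + intros m. specialize (Hfin n m). lra.
    + apply cv_CinvN.
  - apply (cv_squeeze0 _ (l / u)). intros n. unfold bN.
    pose proof (exp_pos (- u * INR (S n))). pose proof (exp_pos (u * INR (S n))).
    assert (HN: 0 < INR (S n)) by (apply lt_0_INR; lia).
    pose proof (exp_ineq1_le (u * INR (S n))).
    assert (E2: exp (- u * INR (S n)) * exp (u * INR (S n)) = 1) by (rewrite <- exp_plus, <- exp_0; f_equal; ring).
    split. nra.
    replace (l / u / INR (S n)) with (l * / (u * INR (S n))) by (field; lra).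
    assert (exp (- u * INR (S n)) <= / (u * INR (S n))).
    { apply (Rmult_le_reg_l (u * INR (S n))). nra. rewrite Rinv_r by nra. nra. }
    nra.
Qed.
Lemma V_facts V : in_classV V -> exists l,
  Vmon V /\ (forall z, 0 < z -> 0 <= V z) /\ (forall z, 0 < z -> V z <= l) /\
  (forall c, c < l -> exists y, 0 < y /\ c < V y) /\
  (forall e, 0 < e -> exists d, 0 < d /\ forall y, 0 < y < d -> Rabs (V y) < e) /\
  (forall x, 0 < x -> forall e, 0 < e -> exists d, 0 < d /\
      forall y, x <= y < x + d -> Rabs (V y - V x) < e).
Proof. intros [HV [Hrc [H0 [l Hl]]]]. exists l.
  assert (Hnn: forall z, 0 < z -> 0 <= V z).
  { intros z Hz. destruct (Rle_dec 0 (V z)) as [|Hn]; auto. exfalso.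
    destruct (H0 (- V z) ltac:(lra)) as [d [Hd Hd']].
    set (y := Rmin z (d / 2)). assert (Hy: 0 < y /\ y < d /\ y <= z) by (unfold y, Rmin; destruct Rle_dec; lra).
    specialize (Hd' y ltac:(lra)). assert (V y <= V z) by (apply HV; lra).
    rewrite Rabs_left in Hd' by lra. lra. }
  split; auto. split; auto. split; [|split; [|split]]; auto.
  - intros z Hz. destruct (Rle_dec (V z) l) as [|Hn]; auto. exfalso.
    destruct (Hl (V z - l) ltac:(lra)) as [M HM].
    set (y := Rmax M z + 1). specialize (HM y ltac:(unfold y; pose proof (Rmax_l M z); lra)).
    assert (V z <= V y) by (apply HV; auto; unfold y; pose proof (Rmax_r M z); lra).
    rewrite Rabs_pos_eq in HM by lra. lra.
  - intros c Hc. destruct (Hl (l - c) ltac:(lra)) as [M HM].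
    exists (Rmax M 0 + 1). pose proof (Rmax_l M 0). pose proof (Rmax_r M 0). split. lra.
    specialize (HM (Rmax M 0 + 1) ltac:(lra)). apply Rabs_def2 in HM. lra.
Qed.

Lemma Inf_spec E : (exists x, E x) -> (exists b, forall x, E x -> b <= x) -> is_inf E (Inf E).
Proof. intros Hne Hb. unfold Inf. apply (epsilon_spec (inhabits 0) (fun m => is_inf E m)).
  destruct (completeness (fun x => E (- x))) as [s [Hs1 Hs2]].
  - destruct Hb as [b Hb]. exists (- b). intros x Hx. specialize (Hb _ Hx). lra.
  - destruct Hne as [x Hx]. exists (- x). rewrite Ropp_involutive. auto.
  - exists (- s). split.
    + intros x Hx. assert (- x <= s) by (apply Hs1; rewrite Ropp_involutive; auto). lra.
    + intros m' Hm'. assert (s <= - m') by (apply Hs2; intros x Hx; specialize (Hm' _ Hx); lra). lra.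
Qed.

Lemma Sup_spec E : (exists x, E x) -> (exists b, forall x, E x -> x <= b) -> is_sup E (Sup E).
Proof. intros Hne Hb. unfold Sup. apply (epsilon_spec (inhabits 0) (fun m => is_sup E m)).
  destruct (completeness E) as [s [Hs1 Hs2]]; auto.
  exists s. split; auto.
Qed.

Lemma inf_approx E m e : is_inf E m -> 0 < e -> exists x, E x /\ x < m + e.
Proof. intros [H1 H2] He. destruct (classic (exists x, E x /\ x < m + e)) as [|Hn]; auto.
  exfalso. assert (m + e <= m).
  { apply H2. intros x Hx. destruct (Rlt_dec x (m + e)); [exfalso; apply Hn; eauto| lra]. } lra.
Qed.

Lemma sup_approx E m e : is_sup E m -> 0 < e -> exists x, E x /\ m - e < x.
Proof. intros [H1 H2] He. destruct (classic (exists x, E x /\ m - e < x)) as [|Hn]; auto.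
  exfalso. assert (m <= m - e).
  { apply H2. intros x Hx. destruct (Rlt_dec (m - e) x); [exfalso; apply Hn; eauto| lra]. } lra.
Qed.

Lemma lam_facts V l c : Vmon V -> (forall z, 0 < z -> 0 <= V z) ->
  (forall c, c < l -> exists y, 0 < y /\ c < V y) ->
  (forall e, 0 < e -> exists d, 0 < d /\ forall y, 0 < y < d -> Rabs (V y) < e) ->
  (forall x, 0 < x -> forall e, 0 < e -> exists d, 0 < d /\
      forall y, x <= y < x + d -> Rabs (V y - V x) < e) ->
  0 < c < l ->
  0 < lamV V c /\ (forall z, 0 < z < lamV V c -> V z <= c) /\ (forall z, lamV V c <= z -> c <= V z).
Proof. intros HV Hnn Hbig H0 Hrc Hc.
  assert (Hi: is_inf (fun x => 0 < x /\ c < V x) (lamV V c)).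
  { apply Inf_spec. destruct (Hbig c ltac:(lra)) as [y Hy]. exists y; auto.
    exists 0. intros x [Hx _]. lra. }
  set (lam := lamV V c) in *.
  assert (Hpos: 0 < lam).
  { destruct (H0 c ltac:(lra)) as [d [Hd Hd']]. apply Rlt_le_trans with d; auto.
    apply (proj2 Hi). intros x [Hx1 Hx2]. destruct (Rlt_dec x d); [|lra].
    specialize (Hd' x ltac:(lra)). rewrite Rabs_pos_eq in Hd' by (apply Hnn; lra). lra. }
  assert (Hbelow: forall z, 0 < z < lam -> V z <= c).
  { intros z Hz. destruct (Rle_dec (V z) c); auto. exfalso.
    assert (lam <= z) by (apply (proj1 Hi); split; lra). lra. }
  assert (Hat: c <= V lam).
  { destruct (Rle_dec c (V lam)); auto. exfalso.
    destruct (Hrc lam Hpos (c - V lam) ltac:(lra)) as [d [Hd Hd']].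
    destruct (inf_approx _ _ d Hi Hd) as [x [[Hx1 Hx2] Hx3]].
    assert (lam <= x) by (apply (proj1 Hi); split; auto).
    specialize (Hd' x ltac:(lra)). apply Rabs_def2 in Hd'. lra. }
  split; auto. split; auto. intros z Hz. assert (V lam <= V z) by (apply HV; lra). lra.
Qed.

Lemma ln_le x y : 0 < x -> x <= y -> ln x <= ln y.
Proof. intros Hx [H|H]; [left; apply ln_increasing; auto| subst; lra]. Qed.

Lemma tau_facts V l c : Vmon V -> (forall z, 0 < z -> 0 <= V z) -> (forall z, 0 < z -> V z <= l) ->
  0 < lamV V c -> (forall z, lamV V c <= z -> c <= V z) -> 0 < c ->
  0 < tauV V c /\ (forall z, lamV V c <= z -> V z <= exp (tauV V c * z)) /\
  (forall e, 0 < e -> exists x, lamV V c <= x /\ 0 < x /\ tauV V c - e < ln (1 + V x) / x).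
Proof. intros HV Hnn Hl Hlam Hge Hc. set (lam := lamV V c) in *.
  set (F := fun y => exists x, lam <= x /\ 0 < x /\ y = ln (1 + V x) / x).
  assert (Hs: is_sup F (tauV V c)).
  { apply Sup_spec. exists (ln (1 + V lam) / lam). exists lam; repeat split; auto; lra.
    exists (ln (1 + l) / lam). intros y [x [H1 [H2 ->]]].
    pose proof (Hnn x H2). pose proof (Hl x H2).
    assert (A1: ln (1 + V x) <= ln (1 + l)) by (apply ln_le; lra).
    assert (A2: 0 <= ln (1 + V x)) by (rewrite <- ln_1; apply ln_le; lra).
    unfold Rdiv. apply Rle_trans with (ln (1 + l) * / x).
    apply Rmult_le_compat_r; [left; apply Rinv_0_lt_compat; lra| auto].
    apply Rmult_le_compat_l. lra. apply Rinv_le_contravar; lra. }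
  set (tau := tauV V c) in *.
  split; [|split].
  - apply Rlt_le_trans with (ln (1 + V lam) / lam).
    + pose proof (Hge lam (Rle_refl _)). assert (0 < ln (1 + V lam)) by (rewrite <- ln_1; apply ln_increasing; lra).
      apply Rdiv_lt_0_compat; lra.
    + apply (proj1 Hs). exists lam; repeat split; auto; lra.
  - intros z Hz. assert (Hr: ln (1 + V z) / z <= tau) by (apply (proj1 Hs); exists z; repeat split; auto; lra).
    assert (Hz0: 0 < z) by lra. pose proof (Hnn z Hz0).
    assert (ln (1 + V z) <= tau * z).
    { apply (Rmult_le_compat_r z) in Hr; [|lra]. unfold Rdiv in Hr.
      rewrite Rmult_assoc, Rinv_l in Hr by lra. lra. }
    pose proof (exp_le _ _ H0).
    assert (1 + V z <= exp (tau * z)) by (rewrite exp_ln in H1 by lra; auto). lra.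
  - intros e He. destruct (sup_approx F tau e Hs He) as [y [[x [H1 [H2 ->]]] H3]].
    exists x; auto.
Qed.
Lemma approx_lin A K C d : 0 <= C -> 0 < d -> (forall h, 0 < h < d -> K - h * C <= A) -> K <= A.
Proof. intros HC Hd H. destruct (Rle_dec K A); auto. exfalso.
  set (q := (K - A) / (2 * (C + 1))).
  assert (Hq: 0 < q) by (unfold q; apply Rdiv_lt_0_compat; lra).
  assert (Eq: q * (2 * (C + 1)) = K - A) by (unfold q; field; lra).
  set (h := Rmin (d / 2) q).
  assert (Hh: 0 < h /\ h < d /\ h <= q) by (unfold h, Rmin; destruct Rle_dec; lra).
  specialize (H h ltac:(lra)). assert (h * C <= q * C) by nra. nra.
Qed.

Theorem lemma2p5 (V : R -> R) (eps c c1 c2 : R) :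
  in_classV V ->
  0 < eps < LV V 0 -> 0 < c < LV V 0 -> 0 < c1 < LV V 0 -> 0 < c2 < LV V 0 ->
  (LV V (tauV V c) >= c / (1 + c) /\
   forall s, 0 < s ->
     LV V (tauV V c + s) <= c + (tauV V c + s) / (s * exp (s * lamV V c))) /\
  (LV V (TV V eps) = eps /\
   forall r s, 0 <= r -> 0 < s -> c1 < c2 ->
     LV V (TV V eps + r + s) <=
       c1 + c2 * exp (- (TV V eps + r + s) * lamV V c1)
       + eps * (TV V eps + r + s) / ((TV V eps + s) * exp (r * lamV V c2))).
Proof.
  intros Hcl Heps Hc Hc1 Hc2.
  destruct (V_facts V Hcl) as [l [HV [Hnn [Hl [Hbig [H0 Hrc]]]]]].
  destruct (LV_conv V 0 l HV Hnn Hl (Rle_refl 0)) as [_ [_ [_ HL0]]].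
  assert (Hl1: 0 <= ln (1 + l)) by (rewrite <- ln_1; apply ln_le; lra).
  split.
  { destruct (lam_facts V l c HV Hnn Hbig H0 Hrc ltac:(lra)) as [Hlam [Hbel Hge]].
    destruct (tau_facts V l c HV Hnn Hl Hlam Hge (proj1 Hc)) as [Htau [Hexp Happ]].
    set (lam := lamV V c) in *. set (tau := tauV V c) in *.
    split.
    - apply Rle_ge. set (K := c / (1 + c)). set (X0 := 2 * ln (1 + l) / tau).
      assert (HK: 0 < K) by (unfold K; apply Rdiv_lt_0_compat; lra).
      assert (HX0: 0 <= X0) by (unfold X0; apply Rmult_le_pos; [lra| left; apply Rinv_0_lt_compat; lra]).
      apply (approx_lin _ K (K * X0) (tau / 2)); [nra| lra|].
      intros h Hh. destruct (Happ h (proj1 Hh)) as [x [Hx1 [Hx2 Hx3]]].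
      pose proof (LV_lower V l tau x HV Hnn Hl H0 ltac:(lra) Hx2) as HB.
      pose proof (Hge x Hx1) as Hvx. pose proof (Hl x Hx2) as Hvl.
      set (Lx := ln (1 + V x)) in *.
      assert (HLx: Lx <= ln (1 + l)) by (apply ln_le; lra).
      assert (Hm: (tau - h) * x < Lx).
      { apply (Rmult_lt_compat_r x) in Hx3; auto. unfold Rdiv in Hx3.
        rewrite Rmult_assoc, Rinv_l in Hx3 by lra. lra. }
      assert (HxX: x <= X0).
      { unfold X0, Rdiv. apply (Rmult_le_reg_r tau); auto.
        rewrite Rmult_assoc, Rinv_l by lra. nra. }
      assert (HE: exp (tau * x) <= (1 + V x) * exp (h * x)).
      { rewrite <- (exp_ln (1 + V x)) by lra. rewrite <- exp_plus. apply exp_le. fold Lx. nra. }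
      set (w := exp (- tau * x)) in *.
      assert (Hw: w * exp (tau * x) = 1) by (unfold w; rewrite <- exp_plus, <- exp_0; f_equal; ring).
      assert (Hwp: 0 < w) by (unfold w; apply exp_pos).
      set (D' := exp (- (h * x))).
      assert (HD: exp (h * x) * D' = 1) by (unfold D'; rewrite <- exp_plus, <- exp_0; f_equal; ring).
      assert (HD1: 1 - h * x <= D') by (unfold D'; pose proof (exp_ineq1_le (- (h * x))); lra).
      pose proof (exp_pos (h * x)). pose proof (exp_pos (tau * x)).
      assert (A1: 1 <= w * ((1 + V x) * exp (h * x))).
      { apply Rle_trans with (w * exp (tau * x)); [lra|]. apply Rmult_le_compat_l; lra. }
      assert (A2: D' <= w * (1 + V x)).
      { assert (0 < D') by (unfold D'; apply exp_pos).
        apply (Rmult_le_compat_r D') in A1; [|lra].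
        replace (w * ((1 + V x) * exp (h * x)) * D') with (w * (1 + V x) * (exp (h * x) * D')) in A1 by ring.
        rewrite HD in A1. lra. }
      assert (A3: K * (1 + V x) <= V x).
      { assert (E: K * (1 + V x) - V x = (c - V x) * / (1 + c)) by (unfold K; field; lra).
        assert (0 < / (1 + c)) by (apply Rinv_0_lt_compat; lra). nra. }
      assert (A4: K * D' <= w * V x) by nra.
      assert (h * x <= h * X0) by (apply Rmult_le_compat_l; lra).
      assert (A5: K * (1 - h * X0) <= K * D') by (apply Rmult_le_compat_l; lra).
      nra.
    - intros s Hs. pose proof (LV_abel V l c lam tau s HV Hnn Hl Hlam ltac:(lra) ltac:(lra) Hs Hbel Hexp) as HA.
      replace ((tau + s) / (s * exp (s * lam))) with ((tau + s) / s * exp (- s * lam)); auto.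
      replace (- s * lam) with (- (s * lam)) by ring. rewrite exp_Ropp. field.
      split; [|lra]. pose proof (exp_pos (s * lam)); lra. }
  destruct (Hbig eps ltac:(lra)) as [y0 [Hy0 Hy0']].
  set (d0 := (V y0 - eps) / (y0 * V y0)).
  assert (Hd0: 0 < d0) by (unfold d0; apply Rdiv_lt_0_compat; nra).
  assert (Hsmall: forall t, 0 <= t < d0 -> eps < LV V t).
  { intros t Ht. pose proof (LV_lower V l t y0 HV Hnn Hl H0 ltac:(lra) Hy0) as HB.
    pose proof (exp_ineq1_le (- t * y0)).
    assert (t * (y0 * V y0) < V y0 - eps).
    { destruct Ht as [_ Ht']. apply (Rmult_lt_compat_r (y0 * V y0)) in Ht'; [|nra]. unfold d0, Rdiv in Ht'.
      rewrite Rmult_assoc, Rinv_l in Ht' by nra. lra. }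
    nra. }
  assert (Hex: exists t1, 0 <= t1 /\ LV V t1 <= eps).
  { destruct (H0 (eps / 2) ltac:(lra)) as [d [Hd Hd']].
    assert (Hl0: 0 < l) by lra.
    set (t1 := 2 * l / (eps * d)).
    assert (Ht1: t1 * d * eps = 2 * l) by (unfold t1; field; lra).
    assert (Ht1p: 0 <= t1) by (unfold t1; apply Rmult_le_pos; [lra| left; apply Rinv_0_lt_compat; nra]).
    exists t1. split; auto.
    pose proof (LV_split V l t1 d (eps / 2) HV Hnn Hl Ht1p ltac:(lra)) as HS.
    assert (HS2: LV V t1 <= eps / 2 + exp (- t1 * d) * l).
    { apply HS. intros z Hz. specialize (Hd' z Hz). apply Rabs_def2 in Hd'. lra. }
    pose proof (exp_ineq1_le (t1 * d)).
    assert (Hw: exp (- t1 * d) * exp (t1 * d) = 1) by (rewrite <- exp_plus, <- exp_0; f_equal; ring).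
    pose proof (exp_pos (- t1 * d)).
    assert (exp (- t1 * d) * l * 2 <= eps).
    { assert (2 * l <= exp (t1 * d) * eps) by nra. nra. }
    lra. }
  set (Es := fun t => 0 <= t /\ LV V t <= eps).
  assert (Hi: is_inf Es (Inf Es)).
  { apply Inf_spec. destruct Hex as [t1 H]. exists t1; auto. exists 0. intros x [Hx _]; auto. }
  set (T0 := Inf Es) in *.
  assert (HT0: d0 <= T0).
  { apply (proj2 Hi). intros x [Hx1 Hx2]. destruct (Rlt_dec x d0); [|lra].
    specialize (Hsmall x ltac:(lra)). lra. }
  assert (HLT0: LV V T0 <= eps).
  { apply approx_le. intros e He.
    set (eta := e * T0 / (l + 1)).
    assert (Heta: 0 < eta) by (unfold eta; apply Rdiv_lt_0_compat; nra).
    destruct (inf_approx Es T0 eta Hi Heta) as [t [[Ht1 Ht2] Ht3]].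
    assert (T0 <= t) by (apply (proj1 Hi); split; auto).
    pose proof (LV_lip V l T0 t HV Hnn Hl ltac:(lra) H) as HL.
    assert ((t - T0) / T0 * l <= e).
    { assert ((t - T0) / T0 <= e / (l + 1)).
      { unfold Rdiv. apply (Rmult_le_reg_r T0); [lra|]. rewrite Rmult_assoc, Rinv_l by lra.
        unfold eta in Ht3. assert (t - T0 < e * T0 / (l + 1)) by lra.
        unfold Rdiv in H1. lra. }
      assert (e / (l + 1) * l <= e).
      { unfold Rdiv. apply (Rmult_le_reg_r (l + 1)); [lra|].
        replace (e * / (l + 1) * l * (l + 1)) with (e * l) by (field; lra). nra. }
      assert (0 <= (t - T0) / T0) by (apply Rmult_le_pos; [lra| left; apply Rinv_0_lt_compat; lra]).
      nra. }
    lra. }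
  assert (Hspec: 0 <= TV V eps /\ LV V (TV V eps) <= eps /\
     forall t', 0 <= t' -> LV V t' <= eps -> TV V eps <= t').
  { unfold TV. apply (epsilon_spec (inhabits 0) (fun t => 0 <= t /\ LV V t <= eps /\
     forall t', 0 <= t' -> LV V t' <= eps -> t <= t')).
    exists T0. split; [lra|]. split; auto. intros t' H1 H2. apply (proj1 Hi); split; auto. }
  set (T := TV V eps) in *. destruct Hspec as [HT1 [HT2 HT3]].
  assert (HTd: d0 <= T).
  { destruct (Rlt_dec T d0); [|lra]. specialize (Hsmall T ltac:(lra)). lra. }
  assert (HTe: LV V T = eps).
  { apply Rle_antisym; auto.
    apply (approx_lin _ eps (2 * l / T) (T / 2)).
    - apply Rmult_le_pos; [lra| left; apply Rinv_0_lt_compat; lra].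
    - lra.
    - intros h Hh. set (t' := T - h).
      assert (Ht': eps < LV V t').
      { destruct (Rlt_dec eps (LV V t')); auto. specialize (HT3 t' ltac:(unfold t'; lra) ltac:(lra)).
        unfold t' in HT3; lra. }
      pose proof (LV_lip V l t' T HV Hnn Hl ltac:(unfold t'; lra) ltac:(unfold t'; lra)) as HL.
      assert ((T - t') / t' * l <= h * (2 * l / T)).
      { unfold t'. replace (T - (T - h)) with h by ring.
        assert (/ (T - h) <= 2 / T).
        { apply (Rmult_le_reg_r (T - h)); [lra|]. rewrite Rinv_l by lra.
          unfold Rdiv. apply (Rmult_le_reg_r T); [lra|].
          replace (2 * / T * (T - h) * T) with (2 * (T - h)) by (field; lra). lra. }
        unfold Rdiv in *. assert (0 <= h * l) by nra.
        replace (h * / (T - h) * l) with (h * l * / (T - h)) by ring.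
        replace (h * (2 * l * / T)) with (h * l * (2 * / T)) by ring.
        apply Rmult_le_compat_l; auto. }
      lra. }
  split; auto.
  intros r s Hr Hs Hc12.
  destruct (lam_facts V l c1 HV Hnn Hbig H0 Hrc ltac:(lra)) as [Hlam1 [Hbel1 _]].
  destruct (lam_facts V l c2 HV Hnn Hbig H0 Hrc ltac:(lra)) as [Hlam2 [Hbel2 _]].
  pose proof (LV_split3 V l (T + r + s) T (lamV V c1) (lamV V c2) c1 c2 HV Hnn Hl HT1 ltac:(lra)
     ltac:(lra) ltac:(lra) ltac:(lra) ltac:(lra) Hbel1 Hbel2) as HS.
  rewrite HTe in HS. set (u := T + r + s) in *. set (l2 := lamV V c2) in *.
  assert (Hk: exp (- (u - T) * l2) * eps <= eps * u / ((T + s) * exp (r * l2))).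
  { assert (exp (- (u - T) * l2) <= exp (- (r * l2))) by (apply exp_le; unfold u; nra).
    rewrite exp_Ropp in H.
    assert (E: eps * u / ((T + s) * exp (r * l2)) = eps * / exp (r * l2) * (u / (T + s))).
    { pose proof (exp_pos (r * l2)). field. split; lra. }
    rewrite E. assert (1 <= u / (T + s)).
    { replace (u / (T + s)) with (1 + r / (T + s)) by (unfold u; field; lra).
      assert (0 <= r / (T + s)) by (apply Rmult_le_pos; [lra| left; apply Rinv_0_lt_compat; lra]). lra. }
    assert (0 < / exp (r * l2)) by (apply Rinv_0_lt_compat, exp_pos).
    apply Rle_trans with (eps * / exp (r * l2)); [nra|].
    rewrite <- (Rmult_1_r (eps * / exp (r * l2))) at 1. apply Rmult_le_compat_l; [nra|lra]. }
  lra.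
Qed.
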